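(* Let $U\in\mathbb R^{d\times(d-k)}$, $V\in\mathbb R^{d\times k}$ have orthonormal columns with $UU^*+VV^*=I$, and let $\hat U\in\mathbb R^{d\times(d-k)}$, $\hat V\in\mathbb R^{d\times k}$ have orthonormal columns with $\hat U\hat U^*+\hat V\hat V^*=I$. Let $S\in\mathbb R^{d\times k}$ be such that $V^*S$ and $\hat V^*S$ are invertible. If $\|U^*\hat V\|\le1/2$ and $\|\hat U^*S(\hat V^*S)^{-1}\|\le\gamma\le1$, then $$\|U^*S(V^*S)^{-1}\|\le\frac{2+4\gamma}{3-2\gamma}.$$
   Context: $\|\cdot\|$ is the spectral norm. *)

(* Defs.v *)
From HB Require Import structures.
From mathcomp Require Import all_boot all_order all_algebra.
From mathcomp Require Import all_classical all_reals.
Set Implicit Arguments. Unset Strict Implicit. Unset Printing Implicit Defensive.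
Import Order.TTheory GRing.Theory Num.Theory.
Local Open Scope ring_scope.
Local Open Scope classical_set_scope.

Definition vnorm2 (R : realType) (n : nat) (x : 'cV[R]_n) : R :=
  Num.sqrt (\sum_(i < n) (x i 0) ^+ 2).

Definition specnorm (R : realType) (m n : nat) (A : 'M[R]_(m, n)) : R :=
  sup [set vnorm2 (A *m x) | x in [set x : 'cV[R]_n | vnorm2 x <= 1]].

(* Main.v *)
Require Import Defs.
From HB Require Import structures.
From mathcomp Require Import all_boot all_order all_algebra.
From mathcomp Require Import all_classical all_reals.
From mathcomp Require Import ring lra.
Import Order.TTheory GRing.Theory Num.Theory.
Local Open Scope ring_scope.

Set Implicit Arguments. Unset Strict Implicit. Unset Printing Implicit Defensive.
Section Aux.
Variable R : realType.

Definition n2 n (v : 'cV[R]_n) := \sum_i v i 0 ^+ 2.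
Definition dot n (a b : 'cV[R]_n) := \sum_i a i 0 * b i 0.

Lemma vnorm2E n (v : 'cV[R]_n) : vnorm2 v = Num.sqrt (n2 v).
Proof. by []. Qed.

Lemma n2_ge0 n (v : 'cV[R]_n) : 0 <= n2 v.
Proof. by apply: sumr_ge0 => i _; exact: sqr_ge0. Qed.

Lemma vnorm2_ge0 n (v : 'cV[R]_n) : 0 <= vnorm2 v.
Proof. exact: sqrtr_ge0. Qed.

Lemma vnorm2_sq n (v : 'cV[R]_n) : vnorm2 v ^+ 2 = n2 v.
Proof. by rewrite /vnorm2 sqr_sqrtr // n2_ge0. Qed.

Lemma dotE n (a b : 'cV[R]_n) : dot a b = (a^T *m b) 0 0.
Proof. by rewrite /dot !mxE; apply: eq_bigr => i _; rewrite mxE. Qed.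

Lemma n2E n (v : 'cV[R]_n) : n2 v = dot v v.
Proof. by apply: eq_bigr => i _; rewrite expr2. Qed.

Lemma dot_adj m n (A : 'M[R]_(m, n)) a b : dot (A *m a) b = dot a (A^T *m b).
Proof. by rewrite !dotE trmx_mul mulmxA. Qed.

Lemma quad_exp n (a b : 'cV[R]_n) (c1 c2 : R) :
  \sum_i (a i 0 * c1 - c2 * b i 0) ^+ 2 = c1 ^+ 2 * n2 a - 2 * c1 * c2 * dot a b + c2 ^+ 2 * n2 b.
Proof.
rewrite /n2 /dot !mulr_sumr -sumrB -big_split /=.
by apply: eq_bigr => i _; ring.
Qed.

Lemma CS n (a b : 'cV[R]_n) : dot a b ^+ 2 <= n2 a * n2 b.
Proof.
have [b0|bp] := eqVneq (n2 b) 0.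
  have bi : forall i, b i 0 = 0.
    move=> i; apply/eqP; rewrite -sqrf_eq0; apply/eqP.
    by apply: (psumr_eq0P _ b0) => // j _; exact: sqr_ge0.
  rewrite /dot big1 ?expr0n ?b0 ?mulr0 // => i _; by rewrite bi mulr0.
have Np : 0 < n2 b by rewrite lt_def bp n2_ge0.
set N := n2 b; set D := dot a b.
have H : 0 <= \sum_i (a i 0 * N - D * b i 0) ^+ 2 by apply: sumr_ge0 => i _; exact: sqr_ge0.
have E : \sum_i (a i 0 * N - D * b i 0) ^+ 2 = N ^+ 2 * n2 a - 2 * N * D * D + D ^+ 2 * N.
  by rewrite quad_exp.
rewrite E in H.
have : 0 <= N * (N * n2 a - D ^+ 2) by rewrite mulrBr -[X in _ <= X]addr0; lra.
by rewrite pmulr_rge0 // subr_ge0 mulrC.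
Qed.

Lemma sqrt_le_sq (x y : R) : 0 <= y -> x <= y ^+ 2 -> Num.sqrt x <= y.
Proof. by move=> y0 h; rewrite -(ger0_norm y0) -sqrtr_sqr; exact: ler_wsqrtr. Qed.

Lemma dot_le n (a b : 'cV[R]_n) : dot a b <= vnorm2 a * vnorm2 b.
Proof.
apply: le_trans (ler_norm _) _.
rewrite -sqrtr_sqr /vnorm2 -sqrtrM ?n2_ge0 //; apply: ler_wsqrtr; exact: CS.
Qed.

Lemma n2D n (a b : 'cV[R]_n) : n2 (a + b) = n2 a + 2 * dot a b + n2 b.
Proof.
rewrite /n2 /dot mulr_sumr -!big_split /=; apply: eq_bigr => i _; rewrite mxE; ring.
Qed.

Lemma vnorm2D n (a b : 'cV[R]_n) : vnorm2 (a + b) <= vnorm2 a + vnorm2 b.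
Proof.
rewrite [vnorm2 (a+b)]/vnorm2 -/(n2 (a+b)).
apply: sqrt_le_sq; first by rewrite addr_ge0 ?vnorm2_ge0.
rewrite n2D sqrrD !vnorm2_sq -mulr_natl -mulrA.
have := dot_le a b; lra.
Qed.

Lemma n2Z n (c : R) (v : 'cV[R]_n) : n2 (c *: v) = c ^+ 2 * n2 v.
Proof. rewrite /n2 mulr_sumr; apply: eq_bigr => i _; rewrite mxE exprMn //. Qed.

Lemma vnorm2Z n (c : R) (v : 'cV[R]_n) : vnorm2 (c *: v) = `|c| * vnorm2 v.
Proof. by rewrite /vnorm2 -/(n2 (c *: v)) n2Z sqrtrM ?sqr_ge0 // sqrtr_sqr. Qed.

Lemma n2_tr m n (A : 'M[R]_(m, n)) z : n2 (A^T *m z) = (z^T *m (A *m A^T) *m z) 0 0.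
Proof. by rewrite n2E dotE trmx_mul trmxK !mulmxA. Qed.

Lemma n2_iso m n (Q : 'M[R]_(m, n)) v : Q^T *m Q = 1%:M -> n2 (Q *m v) = n2 v.
Proof.
move=> h; rewrite !n2E !dotE trmx_mul -(mulmxA v^T) (mulmxA Q^T) h mul1mx //.
Qed.

Lemma vnorm2_iso m n (Q : 'M[R]_(m, n)) v : Q^T *m Q = 1%:M -> vnorm2 (Q *m v) = vnorm2 v.
Proof. by move=> h; rewrite !vnorm2E n2_iso. Qed.

Lemma n2_split m n1 n2' (A : 'M[R]_(m, n1)) (B : 'M[R]_(m, n2')) z :
  A *m A^T + B *m B^T = 1%:M -> n2 (A^T *m z) + n2 (B^T *m z) = n2 z.
Proof.
move=> h; rewrite !n2_tr.
have -> : forall (P Q : 'M[R]_1), P 0 0 + Q 0 0 = (P + Q) 0 0 by move=> P Q; rewrite mxE.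
rewrite -mulmxDl -mulmxDr h.
by rewrite mulmx1 n2E dotE.
Qed.

Lemma vnorm2_proj m n1 n2' (A : 'M[R]_(m, n1)) (B : 'M[R]_(m, n2')) z :
  A *m A^T + B *m B^T = 1%:M -> vnorm2 (A^T *m z) <= vnorm2 z.
Proof.
move=> h; rewrite !vnorm2E; apply: ler_wsqrtr; rewrite -(n2_split z h) lerDl; exact: n2_ge0.
Qed.

End Aux.
Section Aux2.
Variable R : realType.
Local Open Scope classical_set_scope.

Definition snset m n (A : 'M[R]_(m, n)) :=
  [set vnorm2 (A *m x) | x in [set x : 'cV[R]_n | vnorm2 x <= 1]].

Lemma snset_ub m n (A : 'M[R]_(m, n)) : has_ubound (snset A).
Proof.
exists (Num.sqrt (\sum_i n2 (row i A)^T)) => _ [x Hx <-].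
rewrite vnorm2E; apply: ler_wsqrtr.
have nx : n2 x <= 1.
  by rewrite -vnorm2_sq -(expr1n R 2); apply: lerXn2r; rewrite ?nnegrE ?vnorm2_ge0.
rewrite /n2; apply: ler_sum => i _.
have -> : (A *m x) i 0 = dot (row i A)^T x.
  by rewrite /dot mxE; apply: eq_bigr => j _; rewrite !mxE.
apply: le_trans (CS _ _) _.
rewrite -[X in _ <= X]mulr1; apply: ler_wpM2l => //; exact: n2_ge0.
Qed.

Lemma vnorm2_0 n : vnorm2 (0 : 'cV[R]_n) = 0.
Proof. by rewrite vnorm2E /n2 big1 ?sqrtr0 // => i _; rewrite mxE expr0n. Qed.

Lemma snset_0 m n (A : 'M[R]_(m, n)) : snset A 0.
Proof. by rewrite /snset /=; exists 0; rewrite /= ?mulmx0 vnorm2_0. Qed.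

Lemma specnorm_ge0 m n (A : 'M[R]_(m, n)) : 0 <= specnorm A.
Proof.
have hs : has_sup (snset A) by split; [exists 0; exact: snset_0 | exact: snset_ub].
exact: (sup_upper_bound hs (snset_0 A)).
Qed.

Lemma vnorm2_eq0 n (v : 'cV[R]_n) : vnorm2 v = 0 -> v = 0.
Proof.
move=> h; have h2 : n2 v = 0 by rewrite -vnorm2_sq h expr0n.
apply/matrixP => i j; rewrite (ord1 j) mxE; apply/eqP; rewrite -sqrf_eq0; apply/eqP.
by apply: (psumr_eq0P _ h2) => // k _; exact: sqr_ge0.
Qed.

Lemma specnorm_pt m n (A : 'M[R]_(m, n)) s v :
  specnorm A <= s -> vnorm2 (A *m v) <= s * vnorm2 v.
Proof.
move=> hs.
have s0 : 0 <= s := le_trans (specnorm_ge0 A) hs.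
have [v0|vp] := eqVneq (vnorm2 v) 0.
  by have vz := vnorm2_eq0 v0; rewrite vz mulmx0 vnorm2_0 vnorm2_0 mulr0.
have vpos : 0 < vnorm2 v by rewrite lt_def vp vnorm2_ge0.
have hsup : has_sup (snset A) by split; [exists 0; exact: snset_0 | exact: snset_ub].
have inS : snset A (vnorm2 (A *m ((vnorm2 v)^-1 *: v))).
  rewrite /snset /=; exists ((vnorm2 v)^-1 *: v) => //=.
  by rewrite vnorm2Z ger0_norm ?invr_ge0 ?vnorm2_ge0 // mulVf.
have := le_trans (sup_upper_bound hsup inS) hs.
rewrite -scalemxAr vnorm2Z ger0_norm ?invr_ge0 ?vnorm2_ge0 //.
by rewrite mulrC ler_pdivrMr.
Qed.

Lemma tr_bound m n (M : 'M[R]_(m, n)) c :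
  0 <= c -> (forall v, vnorm2 (M *m v) <= c * vnorm2 v) ->
  forall y, vnorm2 (M^T *m y) <= c * vnorm2 y.
Proof.
move=> c0 hM y; set z := M^T *m y.
have e : vnorm2 z ^+ 2 = dot y (M *m z).
  by rewrite vnorm2_sq n2E {1}/z dot_adj trmxK.
have h1 := dot_le y (M *m z).
have h2 := hM z.
have hy := vnorm2_ge0 y; have hz := vnorm2_ge0 z.
have h3 : vnorm2 y * vnorm2 (M *m z) <= vnorm2 y * (c * vnorm2 z) by apply: ler_wpM2l.
have h4 : vnorm2 z * vnorm2 z <= (c * vnorm2 y) * vnorm2 z.
  rewrite -expr2 e; apply: le_trans h1 _; apply: le_trans h3 _; rewrite mulrCA mulrA //.
have [z0|zp] := eqVneq (vnorm2 z) 0.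
  by rewrite z0 mulr_ge0.
have zpos : 0 < vnorm2 z by rewrite lt_def zp hz.
by rewrite -(ler_pM2r zpos).
Qed.

End Aux2.
Unset Implicit Arguments. Set Strict Implicit.

Theorem propositionE3 (R : realType) (d k : nat) (hkd : (k <= d)%N)
  (U Uh : 'M[R]_(d, d - k)) (V Vh S : 'M[R]_(d, k)) (gamma : R) :
  U^T *m U = 1%:M -> V^T *m V = 1%:M -> U *m U^T + V *m V^T = 1%:M ->
  Uh^T *m Uh = 1%:M -> Vh^T *m Vh = 1%:M -> Uh *m Uh^T + Vh *m Vh^T = 1%:M ->
  V^T *m S \in unitmx -> Vh^T *m S \in unitmx ->
  specnorm (U^T *m Vh) <= 2^-1 ->
  specnorm (Uh^T *m S *m invmx (Vh^T *m S)) <= gamma -> gamma <= 1 ->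
  specnorm (U^T *m S *m invmx (V^T *m S)) <= (2 + 4 * gamma) / (3 - 2 * gamma).
Proof.
move=> hU hV hUV hUh hVh hUVh iV iVh hA hY g1.
have g0 : 0 <= gamma := le_trans (specnorm_ge0 _) hY.
have d0 : 0 < 3 - 2 * gamma by lra.
apply: ge_sup; first by exists 0; exact: snset_0.
move=> _ [x /= Hx <-].
pose w := S *m (invmx (V^T *m S) *m x).
have ex : V^T *m w = x by rewrite /w !mulmxA mulmxV // mul1mx.
have -> : U^T *m S *m invmx (V^T *m S) *m x = U^T *m w by rewrite /w !mulmxA.
have eq : Uh^T *m w = (Uh^T *m S *m invmx (Vh^T *m S)) *m (Vh^T *m w).
  by rewrite /w -!mulmxA (mulmxA Vh^T S) mulKmx.
clearbody w.
have ep : Vh^T *m w = Vh^T *m V *m x + Vh^T *m U *m (U^T *m w).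
  rewrite -ex -!mulmxA -mulmxDr; congr (_ *m _).
  by rewrite !mulmxA -mulmxDl addrC hUV mul1mx.
have eu : U^T *m w = U^T *m Vh *m (Vh^T *m w) + U^T *m Uh *m (Uh^T *m w).
  rewrite -!mulmxA -mulmxDr; congr (_ *m _).
  by rewrite !mulmxA -mulmxDl addrC hUVh mul1mx.
have hVUh : Vh *m Vh^T + Uh *m Uh^T = 1%:M by rewrite addrC.
have b1 : vnorm2 (Vh^T *m V *m x) <= vnorm2 x.
  by rewrite -mulmxA; apply: le_trans (vnorm2_proj _ hVUh) _; rewrite vnorm2_iso.
have b2 : vnorm2 (Vh^T *m U *m (U^T *m w)) <= 2^-1 * vnorm2 (U^T *m w).
  have -> : Vh^T *m U = (U^T *m Vh)^T by rewrite trmx_mul trmxK.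
  apply: tr_bound => [|v]; [by rewrite invr_ge0 | exact: specnorm_pt].
have b3 : vnorm2 (U^T *m Vh *m (Vh^T *m w)) <= 2^-1 * vnorm2 (Vh^T *m w).
  exact: specnorm_pt.
have b4 : vnorm2 (U^T *m Uh *m (Uh^T *m w)) <= vnorm2 (Uh^T *m w).
  by rewrite -mulmxA; apply: le_trans (vnorm2_proj _ hUV) _; rewrite vnorm2_iso.
have b5 : vnorm2 (Uh^T *m w) <= gamma * vnorm2 (Vh^T *m w).
  by rewrite eq; exact: specnorm_pt.
have tp : vnorm2 (Vh^T *m w) <= vnorm2 (Vh^T *m V *m x) + vnorm2 (Vh^T *m U *m (U^T *m w)).
  by rewrite {1}ep; exact: vnorm2D.
have tu : vnorm2 (U^T *m w) <= vnorm2 (U^T *m Vh *m (Vh^T *m w)) + vnorm2 (U^T *m Uh *m (Uh^T *m w)).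
  by rewrite {1}eu; exact: vnorm2D.
set t := vnorm2 (U^T *m w) in b2 tu *.
set P := vnorm2 (Vh^T *m w) in b3 b5 tp.
set Q := vnorm2 (Uh^T *m w) in b4 b5.
set xn := vnorm2 x in Hx b1.
have Pp : 0 <= P := vnorm2_ge0 _.
have tpos : 0 <= t := vnorm2_ge0 _.
have h1 : P <= xn + 2^-1 * t by lra.
have h2 : (2^-1 + gamma) * P <= (2^-1 + gamma) * (1 + 2^-1 * t).
  apply: ler_wpM2l; first lra. lra.
rewrite ler_pdivlMr //.
nra.
Qed.
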